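(* Let $k\in\hat I$ and let $\nu,\mu$ be partitions such that $\mu$ is obtained from $\nu$ by adding one box $(x,y)$ of color $i$, i.e. with $k+x-y\equiv i\pmod n$. Then $v^{(k)}(\mu)-v^{(k)}(\nu)=-\overline{\alpha}_i$, where $(\overline\alpha_i)_j=2\delta^{(n)}_{i,j}-\delta^{(n)}_{i,j+1}-\delta^{(n)}_{i,j-1}$ for $j\in\hat I$.
   Context: Fix $n\ge3$ and $\hat I=\{0,\dots,n-1\}$ (residues mod $n$). Let $\delta^{(n)}_{i,j}=1$ if $i\equiv j\pmod n$ and $0$ otherwise. For a partition $\gamma$ with conjugate $\gamma'_y=|\{x:\gamma_x\ge y\}|$: - $(x,y)\in\mathbb Z_{\ge1}^2$ is a convex corner if $\gamma'_{y+1}<\gamma'_y=x$; - $(x,y)$ is a concave corner if $\gamma'_y=x-1$ and either $y=1$ or $\gamma'_{y-1}>x-1$. For $k,i\in\hat I$, $CC_i^{(k)}(\gamma)$ (resp. $CV_i^{(k)}(\gamma)$) is the set of concave (resp. convex) corners with $k+x-y\equiv i$. Set $v^{(k)}(\gamma)_i=|CC_i^{(k)}(\gamma)|-|CV_i^{(k)}(\gamma)|$, so $v^{(k)}(\gamma)\in\mathbb Z^n$. Boxes of $\gamma$ are the pairs $(x,y)$ with $\gamma_x\ge y$. *)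

(* Defs.v *)
From mathcomp Require Import all_boot all_order all_algebra.
Set Implicit Arguments. Unset Strict Implicit. Unset Printing Implicit Defensive.
Import Order.TTheory GRing.Theory Num.Theory.

Definition is_partition (g : seq nat) : bool :=
  sorted geq g && all (fun p => 0 < p) g.

Definition part (g : seq nat) (x : nat) : nat := nth 0 g x.-1.

Definition conjp (g : seq nat) (y : nat) : nat := count (fun p => y <= p) g.

Definition is_box (g : seq nat) (x y : nat) : bool :=
  [&& 0 < x, 0 < y & y <= part g x].

Definition is_convex (g : seq nat) (x y : nat) : bool :=
  [&& 0 < x, 0 < y, conjp g y.+1 < conjp g y & conjp g y == x].

Definition is_concave (g : seq nat) (x y : nat) : bool :=
  [&& 0 < x, 0 < y, conjp g y == x.-1 & (y == 1) || (conjp g y.-1 > x.-1)].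

Definition has_color (n : nat) (k : nat) (i : nat) (x y : nat) : bool :=
  (((k%:Z + x%:Z - y%:Z) %% n%:Z)%Z == (i%:Z %% n%:Z)%Z).

(* Search range: every concave/convex corner (x,y) satisfies
   1 <= x, y <= |gamma| + 1, so enumerating this square is exhaustive. *)
Definition corner_range (g : seq nat) : seq (nat * nat) :=
  [seq (x, y) | x <- iota 1 (sumn g).+1, y <- iota 1 (sumn g).+1].

Definition nCC (n k i : nat) (g : seq nat) : nat :=
  count (fun p => is_concave g p.1 p.2 && has_color n k i p.1 p.2) (corner_range g).

Definition nCV (n k i : nat) (g : seq nat) : nat :=
  count (fun p => is_convex g p.1 p.2 && has_color n k i p.1 p.2) (corner_range g).

Definition vk (n k : nat) (g : seq nat) (i : nat) : int :=
  (nCC n k i g)%:Z - (nCV n k i g)%:Z.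

Definition deltan (n : nat) (a b : int) : int :=
  if ((a %% n%:Z)%Z == (b %% n%:Z)%Z) then 1 else 0.

Definition alphabar (n : nat) (i j : int) : int :=
  2 * deltan n i j - deltan n i (j + 1) - deltan n i (j - 1).

(* Main.v *)
Require Import Defs.
From mathcomp Require Import all_boot all_order all_algebra.
From mathcomp Require Import ring lra zify.
Import Order.TTheory GRing.Theory Num.Theory.

Lemma count_sum_nat (T : Type) (a : pred T) (r : seq T) :
  count a r = \sum_(j <- r) (a j : nat).
Proof. elim: r => [|z r IH]; first by rewrite big_nil. by rewrite big_cons /= IH. Qed.

Lemma nth_count (g : seq nat) b i : sorted geq g -> 0 < b ->
  (b <= nth 0 g i) = (i < count (fun p => b <= p) g).
Proof.
elim: g i => [|p s IH] i /= Hs Hb; first by rewrite nth_nil; case: b Hb.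
have Hs' : sorted geq s by apply: (path_sorted Hs).
have Hall : all (geq p) s.
  by apply: (order_path_min _ Hs) => u v w /= h1 h2; apply: leq_trans h2 h1.
case: (leqP b p) => Hbp.
  case: i => [|i] //=; by rewrite IH.
have -> : count (fun p0 => b <= p0) s = 0.
  rewrite (eq_in_count (a2 := pred0)) ?count_pred0 // => q Hq /=.
  have := allP Hall q Hq => /= Hqp; apply/negbTE; rewrite -ltnNge; lia.
rewrite /= add0n ltn0; apply/negbTE; rewrite -ltnNge.
case: i => [|i] //=.
case: (ltnP i (size s)) => Hi.
  have := allP Hall _ (mem_nth 0 Hi) => /= Hqp; lia.
by rewrite nth_default //; lia.
Qed.

Lemma conj_box g a b : is_partition g -> 0 < a -> 0 < b ->
  is_box g a b = (a <= conjp g b).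
Proof.
move=> /andP[Hs _] Ha Hb; rewrite /is_box Ha Hb /part nth_count //.
by case: a Ha.
Qed.

Lemma conj_mono g b1 b2 : b1 <= b2 -> conjp g b2 <= conjp g b1.
Proof. move=> H; apply: sub_count => q /= h; apply: leq_trans H h. Qed.

Lemma mem_le_sumn (g : seq nat) q : q \in g -> q <= sumn g.
Proof.
elim: g => [|p s IH] //=; rewrite inE => /orP[/eqP->|/IH h]; first by apply: leq_addr.
apply: leq_trans h _; apply: leq_addl.
Qed.

Lemma size_le_sumn (g : seq nat) : all (fun p => 0 < p) g -> size g <= sumn g.
Proof. elim: g => [|p s IH] //= /andP[h1 h2]; have := IH h2; lia. Qed.

Lemma conj_le_sumn g b : all (fun p => 0 < p) g -> conjp g b <= sumn g.
Proof. move=> h; have := count_size (fun p => b <= p) g; have := @size_le_sumn g h; rewrite /conjp; lia. Qed.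

Lemma conj_big g b : sumn g < b -> conjp g b = 0.
Proof.
move=> h; rewrite /conjp (eq_in_count (a2 := pred0)) ?count_pred0 // => q Hq /=.
have := @mem_le_sumn g q Hq => h2; apply/negbTE; rewrite -ltnNge; lia.
Qed.

Lemma eq_from_le (u v : nat) : (forall a, 0 < a -> (a <= u) = (a <= v)) -> u = v.
Proof.
move=> H; apply/eqP; rewrite eqn_leq; apply/andP; split.
  by case: u H => [|u] H //; rewrite -(H u.+1).
by case: v H => [|v] H //; rewrite (H v.+1).
Qed.
Section Counting.
Variables (n k j : nat).

Definition Qcc (g : seq nat) (b : nat) : bool :=
  ((b == 1) || (conjp g b.-1 > conjp g b)) && has_color n k j (conjp g b).+1 b.
Definition Qcv (g : seq nat) (b : nat) : bool :=
  (conjp g b.+1 < conjp g b) && has_color n k j (conjp g b) b.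

Lemma cc_pair g x y : 0 < y ->
  (is_concave g x y && has_color n k j x y) = (x == (conjp g y).+1) && Qcc g y.
Proof.
move=> Hy; case: x => [|x]; first by rewrite /is_concave.
rewrite /is_concave /Qcc Hy /= eqSS eq_sym; case: eqP => [<-|] //=.
Qed.

Lemma cv_pair g x y : 0 < y ->
  (is_convex g x y && has_color n k j x y) = (x == conjp g y) && Qcv g y.
Proof.
move=> Hy; rewrite /is_convex /Qcv Hy /= eq_sym; case: eqP => [<-|] /=; last by rewrite !andbF.
by rewrite andbT; case: x => [|x] //=; rewrite ltn0.
Qed.

Lemma count_one (X : seq nat) a (q : bool) : uniq X -> (q -> a \in X) ->
  count (fun x => (x == a) && q) X = q.
Proof.
move=> HU; case: q => [/(_ isT) Ha|_].
  by rewrite (eq_count (a2 := pred1 a)) ?count_uniq_mem ?Ha // => x /=; rewrite andbT.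
by rewrite (eq_count (a2 := pred0)) ?count_pred0 // => x /=; rewrite andbF.
Qed.

Lemma iota_ext (P : pred nat) S M : S <= M -> (forall b, S < b -> P b = false) ->
  count P (iota 1 M) = count P (iota 1 S).
Proof.
move=> HM HP; rewrite -(subnKC HM) iotaD count_cat.
rewrite (eq_in_count (a1 := P) (a2 := pred0) (s := iota (1 + S) (M - S))) ?count_pred0 ?addn0 //.
move=> b; rewrite mem_iota => /andP[h _] /=; apply: HP; lia.
Qed.

Lemma nCC_eq g M : all (fun p => 0 < p) g -> sumn g < M ->
  nCC n k j g = count (Qcc g) (iota 1 M).
Proof.
move=> Hp HM; rewrite (@iota_ext _ (sumn g).+1 M) //; last first.
  move=> b Hb; rewrite /Qcc; case: b Hb => [//|b] Hb /=.
  rewrite (@conj_big g b); last lia.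
  by case: b Hb => [//|b] Hb /=.
rewrite /nCC /corner_range count_sum_nat big_allpairs exchange_big count_sum_nat.
apply: eq_big_seq => y; rewrite mem_iota => /andP[Hy _].
rewrite (eq_bigr (fun x => ((x == (conjp g y).+1) && Qcc g y : nat))); last first.
  by move=> x _; rewrite /= cc_pair.
rewrite -count_sum_nat count_one ?iota_uniq // => _; rewrite mem_iota.
have := @conj_le_sumn g y Hp; lia.
Qed.

Lemma nCV_eq g M : all (fun p => 0 < p) g -> sumn g < M ->
  nCV n k j g = count (Qcv g) (iota 1 M).
Proof.
move=> Hp HM; rewrite (@iota_ext _ (sumn g).+1 M) //; last first.
  move=> b Hb; rewrite /Qcv (@conj_big g b) ?ltn0 //; lia.
rewrite /nCV /corner_range count_sum_nat big_allpairs exchange_big count_sum_nat.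
apply: eq_big_seq => y; rewrite mem_iota => /andP[Hy _].
rewrite (eq_bigr (fun x => ((x == (conjp g y)) && Qcv g y : nat))); last first.
  by move=> x _; rewrite /= cv_pair.
rewrite -count_sum_nat count_one ?iota_uniq // => /andP[h _]; rewrite mem_iota.
have := @conj_le_sumn g y Hp; lia.
Qed.
End Counting.

Lemma split3 (P : pred nat) y M : 0 < y -> y.+1 <= M ->
  count P (iota 1 M) = count P (iota 1 y.-2) + ((1 < y) && P y.-1) + P y + P y.+1
     + count P (iota y.+2 (M - y.+1)).
Proof.
case: y => [//|[|z]] _ HM.
  rewrite -(subnKC HM) iotaD count_cat addKn /=.
  by rewrite addn0 !add0n.
rewrite -(subnKC HM) addKn -addn3 iotaD iotaD !count_cat /=.
by rewrite !add1n addn3 addn0 !addnA.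
Qed.

Local Open Scope ring_scope.

Lemma col_shift (n : nat) (A i j d : int) : (A %% n = i %% n)%Z ->
  ((A + d) %% n == j %% n)%Z = ((i %% n)%Z == ((j - d) %% n)%Z).
Proof.
move=> H; rewrite -modzDml H modzDml !eqz_mod_dvd.
by congr (_ %| _)%Z; ring.
Qed.

Lemma hc_rel n k i j x y a b : has_color n k i x y ->
  has_color n k j a b =
  ((i%:Z %% n)%Z == ((j%:Z - (a%:Z - x%:Z - (b%:Z - y%:Z))) %% n)%Z).
Proof.
move=> /eqP H; rewrite /has_color -(@col_shift n _ _ j%:Z _ H).
by congr ((_ %% _)%Z == _); ring.
Qed.

Lemma deltanE n a b : deltan n a b = ((a %% n)%Z == (b %% n)%Z)%:Z.
Proof. by rewrite /deltan; case: ifP. Qed.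

Theorem mainTheorem11 (n : nat) (hn : (3 <= n)%N) (k i : 'I_n)
    (nu mu : seq nat) (x y : nat) :
  is_partition nu -> is_partition mu ->
  (0 < x)%N -> (0 < y)%N -> ~~ is_box nu x y ->
  (forall a b : nat, is_box mu a b = is_box nu a b || ((a == x) && (b == y))) ->
  has_color n k i x y ->
  forall j : 'I_n,
    vk n k mu j - vk n k nu j = - alphabar n (i : nat)%:Z (j : nat)%:Z.
Proof.
move=> Pnu Pmu Hx Hy Hbox Hmu Hc j.
have Hle : forall a b, (0 < a)%N -> (0 < b)%N ->
    (a <= conjp mu b)%N = (a <= conjp nu b)%N || ((a == x) && (b == y)).
  by move=> a b Ha Hb; rewrite -!conj_box // Hmu.
have cs : forall b, (0 < b)%N -> b != y -> conjp mu b = conjp nu b.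
  move=> b Hb Hby; apply: eq_from_le => a Ha; by rewrite Hle // (negbTE Hby) andbF orbF.
have h1 : (conjp nu y < x)%N by rewrite ltnNge -conj_box.
have h2 : (x <= conjp mu y)%N by rewrite Hle // !eqxx orbT.
have h3 : (x.-1 <= conjp nu y)%N.
  case: x Hx Hle h1 h2 {Hbox Hc Hmu} => [//|[//|x]] _ Hle h1 h2 /=.
  have := Hle x.+1 y isT Hy; rewrite (leq_trans _ h2) // => /esym/orP[//|].
  by rewrite eqSS (ltn_eqF (ltnSn x)).
have h4 : (conjp mu y <= conjp nu y)%N || (conjp mu y == x).
  by have := Hle (conjp mu y) y (leq_trans Hx h2) Hy; rewrite leqnn eqxx andbT => <-.
have cnu : conjp nu y = x.-1 by lia.
have cmu : conjp mu y = x by move: h4 => /orP[|/eqP] //; lia.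
clear h1 h2 h3 h4.
have ccs : forall b, (0 < b)%N -> b != y -> b != y.+1 -> Qcc n k j mu b = Qcc n k j nu b.
  move=> b hb b1 b2; rewrite /Qcc (cs b hb b1); case: eqP => [//|hb1] /=.
  by rewrite (cs b.-1) //; clear -hb hb1 b2; lia.
have cvs : forall b, (0 < b)%N -> b != y -> b.+1 != y -> Qcv n k j mu b = Qcv n k j nu b.
  by move=> b hb b1 b2; rewrite /Qcv (cs b hb b1) (cs b.+1).
pose M := (sumn mu + sumn nu + y).+2.
have HM1 : (sumn mu < M)%N by rewrite /M; clear; lia.
have HM2 : (sumn nu < M)%N by rewrite /M; clear; lia.
have HM3 : (y.+1 <= M)%N by rewrite /M; clear; lia.
have Pnu' := (andP Pnu).2; have Pmu' := (andP Pmu).2.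
rewrite /vk (@nCC_eq n k j mu M Pmu' HM1) (@nCC_eq n k j nu M Pnu' HM2).
rewrite (@nCV_eq n k j mu M Pmu' HM1) (@nCV_eq n k j nu M Pnu' HM2).
rewrite !(@split3 _ y M Hy HM3).
have -> : count (Qcc n k j mu) (iota 1 y.-2) = count (Qcc n k j nu) (iota 1 y.-2).
  by apply: eq_in_count => b; rewrite mem_iota => hb; apply: ccs; clear -hb Hy; lia.
have -> : count (Qcv n k j mu) (iota 1 y.-2) = count (Qcv n k j nu) (iota 1 y.-2).
  by apply: eq_in_count => b; rewrite mem_iota => hb; apply: cvs; clear -hb Hy; lia.
have -> : count (Qcc n k j mu) (iota y.+2 (M - y.+1)) = count (Qcc n k j nu) (iota y.+2 (M - y.+1)).
  by apply: eq_in_count => b; rewrite mem_iota => hb; apply: ccs; clear -hb Hy; lia.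
have -> : count (Qcv n k j mu) (iota y.+2 (M - y.+1)) = count (Qcv n k j nu) (iota y.+2 (M - y.+1)).
  by apply: eq_in_count => b; rewrite mem_iota => hb; apply: cvs; clear -hb Hy; lia.
set cm1 := conjp nu y.-1; set d := conjp nu y.+1.
have hd : (d <= x.-1)%N by rewrite -cnu conj_mono.
have dmu : conjp mu y.+1 = d by apply: cs; lia.
have cmu1 : (1 < y)%N -> conjp mu y.-1 = cm1 by move=> hy; apply: cs; lia.
have hcm1 : (1 < y)%N -> (x <= cm1)%N.
  by move=> hy; rewrite -(cmu1 hy) -cmu conj_mono // leq_pred.
set E0 := ((i%:Z %% n)%Z == ((j%:Z) %% n)%Z).
set Ep := ((i%:Z %% n)%Z == ((j%:Z + 1) %% n)%Z).
set Em := ((i%:Z %% n)%Z == ((j%:Z - 1) %% n)%Z).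
have px : (x.-1)%:Z = x%:Z - 1 by clear -Hx; lia.
have py : (y.-1)%:Z = y%:Z - 1 by clear -Hy; lia.
have C0 : has_color n k j x y = E0.
  by rewrite (@hc_rel n k i j x y x y Hc) /E0 [X in (_ == X %[mod _])%Z](_ : _ = j%:Z); [| ring].
have Cr : has_color n k j x.+1 y = Em.
  by rewrite (@hc_rel n k i j x y x.+1 y Hc) /Em [X in (_ == X %[mod _])%Z](_ : _ = j%:Z - 1); [| rewrite -addn1 PoszD; ring].
have Cl : has_color n k j x.-1 y = Ep.
  by rewrite (@hc_rel n k i j x y x.-1 y Hc) /Ep [X in (_ == X %[mod _])%Z](_ : _ = j%:Z + 1); [| rewrite px; ring].
have Cu : has_color n k j x y.+1 = Ep.
  by rewrite (@hc_rel n k i j x y x y.+1 Hc) /Ep [X in (_ == X %[mod _])%Z](_ : _ = j%:Z + 1); [| rewrite -addn1 PoszD; ring].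
have Cd : has_color n k j x y.-1 = Em.
  by rewrite (@hc_rel n k i j x y x y.-1 Hc) /Em [X in (_ == X %[mod _])%Z](_ : _ = j%:Z - 1); [| rewrite py; ring].
have y1 : (1 < y)%N = (y != 1) by clear -Hy; lia.
have V1 : Qcc n k j nu y = E0.
  rewrite /Qcc cnu (prednK Hx) C0; case: eqP => [//|Hy1] /=.
  have hy : (1 < y)%N by rewrite y1; apply/negP => /eqP.
  have h := hcm1 hy; rewrite /cm1 in h.
  by rewrite h.
have V2 : Qcc n k j mu y = ((y == 1) || (x < cm1)%N) && Em.
  rewrite /Qcc cmu Cr; case: eqP => [//|Hy1] /=.
  by rewrite cmu1 // y1; apply/negP => /eqP.
have V3 : Qcc n k j nu y.+1 = (d < x.-1)%N && has_color n k j d.+1 y.+1.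
  have y0 : (y.+1 == 1) = false by rewrite eqSS; move: Hy; rewrite lt0n => /negbTE.
  by rewrite /Qcc /= cnu y0.
have V4 : Qcc n k j mu y.+1 = has_color n k j d.+1 y.+1.
  have y0 : (y.+1 == 1) = false by rewrite eqSS; move: Hy; rewrite lt0n => /negbTE.
  rewrite /Qcc /= cmu dmu y0.
  have -> : (d < x)%N by clear -hd Hx; lia.
  by rewrite orbT.
have V5 : Qcv n k j nu y = (d < x.-1)%N && Ep by rewrite /Qcv cnu Cl.
have V6 : Qcv n k j mu y = E0.
  rewrite /Qcv cmu dmu C0.
  have -> : (d < x)%N by clear -hd Hx; lia.
  by [].
have V7 : (1 < y)%N -> Qcv n k j nu y.-1 = has_color n k j cm1 y.-1.
  move=> hy; rewrite /Qcv (prednK Hy) cnu.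
  have -> : (x.-1 < cm1)%N by have := hcm1 hy; clear -Hx; lia.
  by [].
have V8 : (1 < y)%N -> Qcv n k j mu y.-1 = (x < cm1)%N && has_color n k j cm1 y.-1.
  by move=> hy; rewrite /Qcv (prednK Hy) cmu cmu1.
have V9 : (1 < y)%N -> Qcc n k j mu y.-1 = Qcc n k j nu y.-1.
  move=> hy; rewrite /Qcc cmu1 //; case: eqP => [//|Hy2] /=.
  rewrite cs //; clear -hy Hy2; lia.
rewrite V1 V2 V3 V4 V5 V6 /alphabar !deltanE -/E0 -/Ep -/Em.
rewrite (cvs y.+1); last 3 first.
- by [].
- by clear; lia.
- by clear; lia.
set A1 := count _ (iota 1 y.-2); set A2 := count _ (iota 1 y.-2).
set B1 := count _ (iota y.+2 _); set B2 := count _ (iota y.+2 _).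
set Q1 := Qcv n k j nu y.+1; set H1 := has_color n k j d.+1 y.+1.
have hdx : ((d < x.-1)%N = false -> d = x.-1) by clear -hd; lia.
have eH1 : d = x.-1 -> H1 = Ep by move=> e; rewrite /H1 e (prednK Hx) Cu.
clearbody A1 A2 B1 B2 Q1 H1 E0 Ep Em.
case: (ltnP 1 y) => hy.
  rewrite V7 // V8 // V9 //.
  have -> : (y == 1) = false by move: hy; clear; lia.
  rewrite /=.
  set H2 := has_color n k j cm1 y.-1; set Q2 := Qcc n k j nu y.-1.
  have eH2 : cm1 = x -> H2 = Em by move=> e; rewrite /H2 e Cd.
  clearbody H2 Q2.
  have hx := hcm1 hy.
  case: (ltnP x cm1) => hxc /=.
    case hdd : (d < x.-1)%N.
      clear -hdd; lia.
    rewrite (eH1 (hdx hdd)); clear; lia.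
  have ecm : cm1 = x by clear -hx hxc; lia.
  rewrite (eH2 ecm).
  case hdd : (d < x.-1)%N.
    clear -hdd; lia.
  rewrite (eH1 (hdx hdd)); clear; lia.
have -> : (y == 1) = true by move: hy Hy; clear; lia.
case hdd : (d < x.-1)%N.
  clear -hdd; lia.
rewrite (eH1 (hdx hdd)); clear; lia.
Qed.
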